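(* Let $n\ge2$, $\tau\in[n-1]$, $\mu_{\mathrm{L}},\mu_{\mathrm{R}}\in\mathbb{R}$, $\eta=\tau/n$, and $\boldsymbol{\mu}\in\mathbb{R}^n$ with $\mu_i=\mu_{\mathrm{L}}\mathbb{1}\{i\le\tau\}+\mu_{\mathrm{R}}\mathbb{1}\{i>\tau\}$. Let $T'=\{t_0\in\mathbb{Z}^+:|t_0-\tau|\le\min(\tau,n-\tau)/2\}$. Then $$\min_{t_0\in T'}|\boldsymbol{v}_{t_0}^\top\boldsymbol{\mu}|\ge\frac{\sqrt3}{3}|\mu_{\mathrm{L}}-\mu_{\mathrm{R}}|\sqrt{n\eta(1-\eta)}.$$
   Context: For $t\in[n-1]$, $\boldsymbol{v}_t=\bigl(\sqrt{\tfrac{n-t}{tn}}\boldsymbol{1}_t^\top,\,-\sqrt{\tfrac{t}{(n-t)n}}\boldsymbol{1}_{n-t}^\top\bigr)^\top\in\mathbb{R}^n$, where $\boldsymbol{1}_k$ is the all-ones vector of length $k$. *)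

(* Defs.v *)
From mathcomp Require Import all_boot all_order all_algebra.
Set Implicit Arguments. Unset Strict Implicit. Unset Printing Implicit Defensive.
Import Order.TTheory GRing.Theory Num.Theory.
Local Open Scope ring_scope.

(* v_t in R^n (indices i : 'I_n are 0-based, so the paper's i <= t is (i < t)%N):
   first t entries sqrt((n-t)/(t n)), last n-t entries -sqrt(t/((n-t) n)).
   Intended for 1 <= t <= n-1. *)
Definition vt (R : rcfType) (n t : nat) : 'cV[R]_n :=
  \col_(i < n) (if (i < t)%N
                then Num.sqrt ((n - t)%:R / (t%:R * n%:R))
                else - Num.sqrt (t%:R / ((n - t)%:R * n%:R))).

Definition mu_vec (R : rcfType) (n tau : nat) (muL muR : R) : 'cV[R]_n :=
  \col_(i < n) (if (i < tau)%N then muL else muR).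

Definition Tprime (R : rcfType) (n tau : nat) (t0 : nat) : Prop :=
  (0 < t0)%N /\ `| (t0%:R : R) - tau%:R | <= (Num.min (tau%:R) ((n - tau)%:R)) / 2.

(* Main.v *)
Require Import Defs.
From mathcomp Require Import all_boot all_order all_algebra.
From mathcomp Require Import ring lra zify.
Import Order.TTheory GRing.Theory Num.Theory.
Local Open Scope ring_scope.

Lemma sum_form (R : rcfType) (n t tau : nat) (muL muR : R) :
  ((vt R n t)^T *m mu_vec n tau muL muR) ord0 ord0 =
  \sum_(0 <= i < n) ((if (i < t)%N then Num.sqrt ((n - t)%:R / (t%:R * n%:R))
                else - Num.sqrt (t%:R / ((n - t)%:R * n%:R))) *
                (if (i < tau)%N then muL else muR)).
Proof.
rewrite mxE big_mkord; apply: eq_bigr => i _; by rewrite !mxE.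
Qed.

Lemma sqrt_mul_sq (R : rcfType) (x c : R) : 0 <= x -> 0 <= c ->
  (Num.sqrt x * c) ^+ 2 = x * c ^+ 2.
Proof. by move=> hx hc; rewrite exprMn sqr_sqrtr. Qed.

Lemma eq_nonneg_sq (R : rcfType) (x y : R) : 0 <= x -> 0 <= y ->
  x ^+ 2 = y ^+ 2 -> x = y.
Proof. by move=> hx hy e; apply/eqP; rewrite -(eqrXn2 (n:=2)) // e. Qed.

Lemma split3 (R : zmodType) (F : nat -> R) m1 m2 n : (m1 <= m2)%N -> (m2 <= n)%N ->
  \sum_(0 <= i < n) F i = \sum_(0 <= i < m1) F i + \sum_(m1 <= i < m2) F i + \sum_(m2 <= i < n) F i.
Proof. by move=> h1 h2; rewrite -big_cat_nat // -big_cat_nat // (leq_trans h1 h2). Qed.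
Lemma sconst (R : zmodType) (F : nat -> R) c m k :
  (forall i, (m <= i < k)%N -> F i = c) -> \sum_(m <= i < k) F i = c *+ (k - m).
Proof. by move=> h; rewrite -sumr_const_nat; apply: eq_big_nat. Qed.

Theorem lemmaA1 (R : rcfType) (n tau : nat) (muL muR : R) :
  (2 <= n)%N -> (1 <= tau)%N -> (tau <= n - 1)%N ->
  let eta : R := tau%:R / n%:R in
  forall t0 : nat, Tprime R n tau t0 ->
    Num.sqrt 3 / 3 * `|muL - muR| * Num.sqrt (n%:R * eta * (1 - eta))
    <= `| ((vt R n t0)^T *m mu_vec n tau muL muR) ord0 ord0 |.
Proof.
move=> hn htau htaun eta t [ht0 hT].
have htn : (tau < n)%N by lia.
rewrite sum_form.
set N : R := n%:R. set T : R := t%:R. set U : R := tau%:R.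
have N0 : 0 < N by rewrite ltr0n; lia.
have T0 : 1 <= T by rewrite ler1n.
have U0 : 1 <= U by rewrite ler1n.
have UN : U + 1 <= N by rewrite /U /N /T natr1 ler_nat.
have nU : (n - tau)%:R = N - U by rewrite natrB // ltnW.
rewrite nU in hT.
have hm1 : Num.min U (N - U) <= U by rewrite ge_min lexx.
have hm2 : Num.min U (N - U) <= N - U by rewrite ge_min lexx orbT.
move: hT; rewrite -/U -/T ler_norml => /andP [hT1 hT2].
have hX : N * eta * (1 - eta) = U * (N - U) / N by rewrite /eta; field; rewrite lt0r_neq0.
rewrite hX.
set D := muL - muR.
have cX : 0 <= Num.sqrt 3 / 3 * Num.sqrt (U * (N - U) / N).
  by rewrite mulr_ge0 // ?divr_ge0 ?sqrtr_ge0.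
have cX2 : (Num.sqrt 3 / 3 * Num.sqrt (U * (N - U) / N)) ^+ 2 = U * (N - U) / N / 3.
  rewrite !exprMn !sqr_sqrtr ?divr_ge0 ?mulr_ge0 //; try lra.
case: (leqP t tau) => htt.
-
  have nT : (n - t)%:R = N - T by rewrite natrB //; lia.
  rewrite nT.
  set a := Num.sqrt ((N - T) / (T * N)).
  set b := Num.sqrt (T / ((N - T) * N)).
  have TU : T <= U by rewrite ler_nat.
  have hab : a * T = b * (N - T).
    apply: eq_nonneg_sq.
    - by rewrite mulr_ge0 ?sqrtr_ge0 //; lra.
    - by rewrite mulr_ge0 ?sqrtr_ge0 //; lra.
    rewrite !sqrt_mul_sq ?divr_ge0 ?mulr_ge0 //; try lra.
    field; apply/andP; split; rewrite lt0r_neq0 //; lra.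
  rewrite (@split3 _ _ t tau n htt (ltnW htn)).
  rewrite (@sconst _ _ (a * muL)); last by move=> i /andP [_ hi]; rewrite hi (leq_trans hi htt).
  rewrite (@sconst _ _ (- b * muL)); last by move=> i /andP [hi ->]; rewrite ltnNge hi.
  rewrite (@sconst _ _ (- b * muR)); last by move=> i /andP [hi _]; rewrite ltnNge (leq_trans htt hi) /= ltnNge hi.
  rewrite subn0 -(mulr_natr (a * muL)) -(mulr_natr (- b * muL)) -(mulr_natr (- b * muR)) (natrB R htt) nU -/T -/U.
  have -> : a * muL * T + - b * muL * (U - T) + - b * muR * (N - U)
      = b * (N - U) * D.
    rewrite /D; have := hab; move=> e.
    transitivity ((a * T) * muL - b * (U - T) * muL - b * (N - U) * muR); first by ring.
    rewrite e; ring.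
  rewrite normrM (ger0_norm (x := b * (N - U))); last by rewrite mulr_ge0 ?sqrtr_ge0 //; lra.
  rewrite mulrAC; apply: ler_wpM2r => //.
  rewrite -ler_sqr ?nnegrE //; last by rewrite mulr_ge0 ?sqrtr_ge0 //; lra.
  rewrite cX2 sqrt_mul_sq ?divr_ge0 ?mulr_ge0 //; try lra.
  rewrite -subr_ge0.
  have -> : T / ((N - T) * N) * (N - U) ^+ 2 - U * (N - U) / N / 3
     = (N - U) * (3 * T * (N - U) - U * (N - T)) / (3 * N * (N - T)).
    field; apply/andP; split; rewrite lt0r_neq0 //; lra.
  rewrite divr_ge0 ?mulr_ge0 //; try lra.
  have h1 : 2 * (U - T) <= U by lra.
  have h2 : 2 * (U - T) <= N - U by lra.
  nra.
-
  have TU : U + 1 <= T by rewrite /U /N /T natr1 ler_nat.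
  have TN : T < N by lra.
  have htn' : (t < n)%N by rewrite -(ltr_nat R).
  have nT : (n - t)%:R = N - T by rewrite natrB // ltnW.
  rewrite nT.
  set a := Num.sqrt ((N - T) / (T * N)).
  set b := Num.sqrt (T / ((N - T) * N)).
  have hab : a * T = b * (N - T).
    apply: eq_nonneg_sq.
    - by rewrite mulr_ge0 ?sqrtr_ge0 //; lra.
    - by rewrite mulr_ge0 ?sqrtr_ge0 //; lra.
    rewrite !sqrt_mul_sq ?divr_ge0 ?mulr_ge0 //; try lra.
    field; apply/andP; split; rewrite lt0r_neq0 //; lra.
  rewrite (@split3 _ _ tau t n (ltnW htt) (ltnW htn')).
  rewrite (@sconst _ _ (a * muL)); last by move=> i /andP [_ hi]; rewrite hi (ltn_trans hi htt).
  rewrite (@sconst _ _ (a * muR)); last by move=> i /andP [hi ->]; rewrite ltnNge hi.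
  rewrite (@sconst _ _ (- b * muR)); last by move=> i /andP [hi _]; rewrite ltnNge hi /= ltnNge (leq_trans (ltnW htt) hi).
  rewrite subn0 -(mulr_natr (a * muL)) -(mulr_natr (a * muR)) -(mulr_natr (- b * muR)) (natrB R (ltnW htt)) nT -/T -/U.
  have -> : a * muL * U + a * muR * (T - U) + - b * muR * (N - T)
      = a * U * D.
    rewrite /D; have := hab; move=> e.
    transitivity (a * U * muL + a * T * muR - a * U * muR - b * (N - T) * muR); first by ring.
    rewrite e; ring.
  rewrite normrM (ger0_norm (x := a * U)); last by rewrite mulr_ge0 ?sqrtr_ge0 //; lra.
  rewrite mulrAC; apply: ler_wpM2r => //.
  rewrite -ler_sqr ?nnegrE //; last by rewrite mulr_ge0 ?sqrtr_ge0 //; lra.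
  rewrite cX2 sqrt_mul_sq ?divr_ge0 ?mulr_ge0 //; try lra.
  rewrite -subr_ge0.
  have -> : (N - T) / (T * N) * U ^+ 2 - U * (N - U) / N / 3
     = U * (3 * U * (N - T) - T * (N - U)) / (3 * N * T).
    field; apply/andP; split; rewrite lt0r_neq0 //; lra.
  rewrite divr_ge0 ?mulr_ge0 //; try lra.
  have h2 : 2 * (T - U) <= N - U by lra.
  nra.
Qed.
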